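(* Consider the Unbiased Space Saving sketch with $m$ bins run on an arbitrary (deterministic) stream of rows $x_1, x_2, \ldots$, each row being an item label. For any item $x$ and any time $t$, the estimate $\hat{N}_x(t)$ is an unbiased estimate of the true count $n_x(t)$, i.e. $\mathbb{E}\,\hat{N}_x(t) = n_x(t)$.
   Context: Unbiased Space Saving sketch with $m$ bins: maintain a list of $m$ (item, count) pairs, all counts initialized to $0$ (initially unlabeled). For each new row with item $x_{new}$: if $x_{new}$ is the label of some pair, increment that pair's count by $1$. Otherwise, find the pair $(x_{min}, \hat{N}_{min})$ with the smallest count, increment its count by $1$, and with probability $1/(\hat{N}_{min}+1)$ (independently of everything else) replace its label by $x_{new}$. After $t$ rows, $\hat{N}_x(t)$ is the count of the pair labeled $x$ if $x$ is a label, and $0$ otherwise; $n_x(t)$ is the number of occurrences of $x$ among the first $t$ rows. *)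

(* Defs.v *)
(* Discrete probability over the finitely many coin-flip
   outcomes is represented as a finitely supported weighted list of states. *)
From mathcomp Require Import all_boot all_order all_algebra.
Set Implicit Arguments. Unset Strict Implicit. Unset Printing Implicit Defensive.
Import Order.TTheory GRing.Theory Num.Theory.
Local Open Scope ring_scope.

(* A sketch state: m (label, count) pairs; label None = unlabeled. *)
Definition uss_state (T : eqType) (m : nat) := {ffun 'I_m -> option T * nat}.

Definition uss_init (T : eqType) (m : nat) : uss_state T m :=
  [ffun => (None, 0%N)].

Definition uss_upd (T : eqType) m (st : uss_state T m) (i : 'I_m)
  (v : option T * nat) : uss_state T m :=
  [ffun j => if j == i then v else st j].

Definition dist (R : Type) (A : Type) := seq (R * A).

Definition dist_bind (R : ringType) (A B : Type) (d : dist R A)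
  (f : A -> dist R B) : dist R B :=
  flatten [seq [seq (p.1 * q.1, q.2) | q <- f p.2] | p <- d].

(* One update step of Unbiased Space Saving with new row x.
   [choose st] selects the bin used as "the pair with smallest count"
   (tie-breaking rule; required below to return a minimal-count bin). *)
Definition uss_step (R : realFieldType) (T : eqType) m
  (choose : uss_state T m -> 'I_m) (x : T) (st : uss_state T m)
  : dist R (uss_state T m) :=
  match [pick i | (st i).1 == Some x] with
  | Some i => [:: (1, uss_upd st i ((st i).1, (st i).2.+1))]
  | None =>
      let i := choose st in
      let c := (st i).2 in
      [:: ((c.+1%:R)^-1, uss_upd st i (Some x, c.+1));
          (1 - (c.+1%:R)^-1, uss_upd st i ((st i).1, c.+1))]
  end.

Fixpoint uss_run (R : realFieldType) (T : eqType) m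
  (choose : uss_state T m -> 'I_m) (xs : nat -> T) (t : nat)
  : dist R (uss_state T m) :=
  match t with
  | 0 => [:: (1, uss_init T m)]
  | t'.+1 => dist_bind (uss_run R choose xs t') (uss_step R choose (xs t'))
  end.

Definition uss_est (T : eqType) m (st : uss_state T m) (x : T) : nat :=
  match [pick i | (st i).1 == Some x] with
  | Some i => (st i).2
  | None => 0%N
  end.

Definition expect (R : ringType) A (d : dist R A) (f : A -> R) : R :=
  \sum_(p <- d) p.1 * f p.2.

Definition true_count (T : eqType) (xs : nat -> T) (x : T) (t : nat) : nat :=
  count (pred1 x) [seq xs i | i <- iota 0 t].

(* Main.v *)
Require Import Defs.
From mathcomp Require Import all_boot all_order all_algebra.
Import Order.TTheory GRing.Theory Num.Theory.
Local Open Scope ring_scope.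
Set Implicit Arguments. Unset Strict Implicit. Unset Printing Implicit Defensive.

Definition inv_lab (T : eqType) m (st : uss_state T m) :=
  forall i j y, (st i).1 = Some y -> (st j).1 = Some y -> i = j.

Lemma est_unique (T : eqType) m (st : uss_state T m) x k :
  (st k).1 = Some x -> (forall j, (st j).1 = Some x -> j = k) ->
  uss_est st x = (st k).2.
Proof.
move=> Hk Hu; rewrite /uss_est; case: pickP => [j /eqP Hj | Hn].
  by rewrite (Hu _ Hj).
by move: (Hn k); rewrite Hk eqxx.
Qed.

Lemma est_none (T : eqType) m (st : uss_state T m) x :
  (forall j, (st j).1 != Some x) -> uss_est st x = 0%N.
Proof.
move=> Hn; rewrite /uss_est; case: pickP => [j Hj | //].
by move: (Hn j); rewrite Hj.
Qed.

Lemma expect_bind (R : nzRingType) A B (d : dist R A) (f : A -> dist R B) g :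
  expect (dist_bind d f) g = \sum_(p <- d) p.1 * expect (f p.2) g.
Proof.
rewrite /expect /dist_bind big_flatten /= big_map; apply: eq_bigr => p _.
rewrite big_map big_distrr /=; apply: eq_bigr => q _; by rewrite mulrA.
Qed.

Lemma step_mass (R : realFieldType) (T : eqType) m (choose : uss_state T m -> 'I_m) (xn : T)
  (st : uss_state T m) :
  expect (uss_step R choose xn st) (fun _ => 1) = 1.
Proof.
rewrite /uss_step /expect; case: pickP => [i _ | _].
  by rewrite big_cons big_nil mulr1 addr0.
by rewrite !big_cons big_nil !mulr1 addr0 addrC subrK.
Qed.

Lemma step_inv (R : realFieldType) (T : eqType) m (choose : uss_state T m -> 'I_m) (xn : T)
  (st : uss_state T m) : inv_lab st ->
  forall p, p \in uss_step R choose xn st -> inv_lab p.2.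
Proof.
move=> Hinv p; rewrite /uss_step; case: pickP => [i _ | Hn].
  rewrite inE => /eqP -> /= a b y; rewrite !ffunE.
  have E : forall j, (if j == i then ((st i).1, (st i).2.+1) else st j).1 = (st j).1.
    by move=> j; case: eqP => // ->.
  rewrite !E; exact: Hinv.
rewrite !inE => /orP [] /eqP -> /= a b y; rewrite !ffunE.
  case: eqP => [-> | na]; case: eqP => [-> | nb] //= H1 H2.
  - by move: (Hn b); rewrite H2 -H1 eqxx.
  - by move: (Hn a); rewrite H1 -H2 eqxx.
  - exact: Hinv H1 H2.
have E : forall j, (if j == choose st then ((st (choose st)).1, (st (choose st)).2.+1) else st j).1 = (st j).1.
  by move=> j; case: eqP => // ->.
rewrite !E; exact: Hinv.
Qed.

Lemma step_est (R : realFieldType) (T : eqType) m (choose : uss_state T m -> 'I_m)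
  (xn x : T) (st : uss_state T m) : inv_lab st ->
  expect (uss_step R choose xn st) (fun s => (uss_est s x)%:R)
  = (uss_est st x + (xn == x))%N%:R.
Proof.
move=> Hinv; rewrite /uss_step /expect; case: pickP => [i /eqP Hi | Hn].
  rewrite big_cons big_nil mul1r addr0 /=; congr (_%:R).
  set st' := uss_upd _ _ _.
  have lab j : (st' j).1 = (st j).1 by rewrite /st' ffunE; case: eqP => // ->.
  have cnt j : (st' j).2 = if j == i then (st i).2.+1 else (st j).2.
    by rewrite ffunE; case: eqP.
  case: (pickP (fun j => (st j).1 == Some x)) => [k /eqP Hk | Hnx].
    have Hu j : (st j).1 = Some x -> j = k by move=> Hj; exact: Hinv Hj Hk.
    rewrite (est_unique Hk Hu) (@est_unique _ _ st' x k); last 2 first.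
    - by rewrite lab.
    - by move=> j; rewrite lab; exact: Hu.
    rewrite cnt; case: (eqVneq xn x) => [Exn | nx].
      subst xn; have -> : k = i by exact: Hinv Hk Hi.
      by rewrite !eqxx addn1.
    case: eqP => [Eki | _]; last by rewrite addn0.
    by move: Hk; rewrite Eki Hi => -[] Exn; move: nx; rewrite Exn eqxx.
  have Hnx' j : (st j).1 != Some x by rewrite Hnx.
  rewrite (est_none Hnx') (@est_none _ _ st' x); last by move=> j; rewrite lab.
  case: (eqVneq xn x) => [Exn | //]; subst xn.
  by move: (Hnx i); rewrite Hi eqxx.
rewrite !big_cons big_nil addr0 /=.
set i := choose st; set c := (st i).2.
set a := (c.+1%:R : R)^-1.
have ha : a * c.+1%:R = 1 by rewrite mulVf // pnatr_eq0.
set st1 := uss_upd st i _; set st2 := uss_upd st i _.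
have lab2 j : (st2 j).1 = (st j).1 by rewrite ffunE; case: eqP => // ->.
have cnt2 j : (st2 j).2 = if j == i then c.+1 else (st j).2.
  by rewrite ffunE; case: eqP.
have cnt1 j : (st1 j).2 = if j == i then c.+1 else (st j).2.
  by rewrite ffunE; case: eqP.
have lab1 j : (st1 j).1 = if j == i then Some xn else (st j).1.
  by rewrite ffunE; case: eqP.
case: (eqVneq xn x) => [Exn | nx].
  subst xn.
  have Hnx j : (st j).1 != Some x by rewrite Hn.
  rewrite (est_none Hnx) (@est_none _ _ st2); last by move=> j; rewrite lab2.
  rewrite (@est_unique _ _ st1 x i); first last.
  - move=> j; rewrite lab1; case: (eqVneq j i) => // _ Hj.
    by move: (Hnx j); rewrite Hj eqxx.
  - by rewrite lab1 eqxx.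
  by rewrite cnt1 eqxx mulr0 addr0 ha.
case: (pickP (fun j => (st j).1 == Some x)) => [k /eqP Hk | Hnx].
  have Hu j : (st j).1 = Some x -> j = k by move=> Hj; exact: Hinv Hj Hk.
  rewrite (est_unique Hk Hu) addn0.
  case: (eqVneq k i) => [Eki | nki].
    subst k.
    rewrite (@est_none _ _ st1); last first.
      move=> j; rewrite lab1; case: (eqVneq j i) => [_ | nj].
        by apply/negP => /eqP [] Exn; move: nx; rewrite Exn eqxx.
      by apply/negP => /eqP /Hu Eji; move: nj; rewrite Eji eqxx.
    rewrite (@est_unique _ _ st2 x i); first last.
    - by move=> j; rewrite lab2; exact: Hu.
    - by rewrite lab2.
    rewrite cnt2 eqxx mulr0 add0r mulrBl ha mul1r -/c.
    by rewrite -addn1 natrD addrK.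
  rewrite (@est_unique _ _ st1 x k); first last.
  - move=> j; rewrite lab1; case: (eqVneq j i) => [_ | _ /Hu //].
    by case=> Exn; move: nx; rewrite Exn eqxx.
  - by rewrite lab1 (negbTE nki).
  rewrite (@est_unique _ _ st2 x k); first last.
  - by move=> j; rewrite lab2; exact: Hu.
  - by rewrite lab2.
  by rewrite cnt1 cnt2 (negbTE nki) -mulrDl addrC subrK mul1r.
rewrite (est_none (x:=x) (st:=st)); last by move=> j; rewrite Hnx.
rewrite (@est_none _ _ st1); last first.
  move=> j; rewrite lab1; case: (eqVneq j i) => [_ | _]; last by rewrite Hnx.
  by apply/negP => /eqP [] Exn; move: nx; rewrite Exn eqxx.
rewrite (@est_none _ _ st2); last by move=> j; rewrite lab2 Hnx.
by rewrite !mulr0 addr0.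
Qed.

Lemma sum_lin (R : nzRingType) A (d : dist R A) (f : A -> R) c :
  \sum_(p <- d) p.1 * (f p.2 + c) = expect d f + expect d (fun _ => 1) * c.
Proof.
rewrite /expect big_distrl -big_split /=; apply: eq_bigr => p _.
by rewrite mulr1 mulrDr.
Qed.

Lemma run_all (R : realFieldType) (T : eqType) m (choose : uss_state T m -> 'I_m)
  (xs : nat -> T) (x : T) t :
  [/\ forall p, p \in uss_run R choose xs t -> inv_lab p.2,
      expect (uss_run R choose xs t) (fun _ => 1) = 1 &
      expect (uss_run R choose xs t) (fun st => (uss_est st x)%:R)
        = (true_count xs x t)%:R].
Proof.
elim: t => [|t [IHi IHm IHe]].
  split.
  - move=> p; rewrite inE => /eqP -> a b y /=; rewrite ffunE //.
  - by rewrite /expect big_cons big_nil mulr1 addr0.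
  - rewrite /expect big_cons big_nil addr0 mul1r /= /true_count /=.
    by rewrite est_none // => j; rewrite ffunE.
split.
- move=> p /flattenP [s /mapP [q Hq ->] /mapP [r Hr ->]] /=.
  exact: step_inv (IHi q Hq) _ Hr.
- rewrite /= expect_bind -[RHS]IHm; apply: eq_big_seq => p _.
  by rewrite step_mass.
- rewrite /= expect_bind (eq_big_seq (fun p : R * uss_state T m => p.1 * ((uss_est p.2 x)%:R + (xs t == x : nat)%:R))); last first.
    move=> p Hp; rewrite step_est; last exact: IHi.
    congr (_ * _); exact: natrD.
  rewrite (sum_lin _ (fun s => (uss_est s x)%:R)) IHe IHm mul1r /true_count -addn1 iotaD map_cat count_cat natrD /=.
  by rewrite addn0 eq_sym.
Qed.

Theorem theorem1 (R : realFieldType) (T : eqType) (m : nat) (hm : (0 < m)%N)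
  (choose : uss_state T m -> 'I_m)
  (hchoose : forall (st : uss_state T m) (j : 'I_m),
      ((st (choose st)).2 <= (st j).2)%N)
  (xs : nat -> T) (x : T) (t : nat) :
  expect (uss_run R choose xs t) (fun st => (uss_est st x)%:R)
  = (true_count xs x t)%:R.
Proof. by case: (run_all R choose xs x t). Qed.
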